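(* Let $q=3^m$ with $m\ge1$, let $\alpha\in\mathbb{F}_q$ be a non-square, and let $Z\in\mathbb{F}_{q^2}\setminus\mathbb{F}_q$ with $Z^2=\alpha$. Let $f(x)=x^{q+2}$ on $\mathbb{F}_{q^2}$ and for $b\in\mathbb{F}_{q^2}$ put $\beta(b)=\beta_f(1,\tfrac14 b)$. Then: (1) for every $c\in\mathbb{F}_q^*$, $\beta(c)=q+2$ if $c^2+1\in C_1$ and $\beta(c)=q$ otherwise; (2) for every $d\in\mathbb{F}_q^*$, $\beta(dZ)=1$; in particular $\nu_1>0$; (3) for all $c,d\in\mathbb{F}_q^*$, $\beta(c+dZ)\in\{0,1,2,5\}$.
   Context: $\beta_f(a,b)$ is the number of $(x,y)\in\mathbb{F}_{q^2}^2$ with $f(x)-f(y)=b$ and $f(x+a)-f(y+a)=b$. For the power function $f$, $\nu_i=\#\{b\in\mathbb{F}_{q^2}^*:\ \beta_f(1,b)=i\}$. $C_0$ (resp. $C_1$) denotes the set of nonzero squares (resp. non-squares) in $\mathbb{F}_q^*$. *)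

(* Defs.v *)
From mathcomp Require Import all_boot all_order all_algebra.
Set Implicit Arguments. Unset Strict Implicit. Unset Printing Implicit Defensive.
Import GRing.Theory.
Local Open Scope ring_scope.

Section Defs.
Context {F : finFieldType}.

Definition inFq (q : nat) (x : F) : bool := x ^+ q == x.

Definition sqFq (q : nat) (x : F) : bool := [exists y : F, inFq q y && (y ^+ 2 == x)].

Definition C0 (q : nat) : {set F} := [set x | [&& inFq q x, x != 0 & sqFq q x]].
Definition C1 (q : nat) : {set F} := [set x | [&& inFq q x, x != 0 & ~~ sqFq q x]].

Definition Fqstar (q : nat) : {set F} := [set x | inFq q x && (x != 0)].

Definition betaf (f : F -> F) (a b : F) : nat :=
  #|[set xy : F * F | (f xy.1 - f xy.2 == b) && (f (xy.1 + a) - f (xy.2 + a) == b)]|.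

Definition nu (f : F -> F) (i : nat) : nat :=
  #|[set b : F | (b != 0) && (betaf f 1 b == i)]|.
End Defs.

(* Main.v *)
Require Import Defs.
From mathcomp Require Import all_boot all_order all_algebra all_field.
From mathcomp Require Import ring.
Import GRing.Theory.
Local Open Scope ring_scope.
Set Implicit Arguments. Unset Strict Implicit. Unset Printing Implicit Defensive.

Section P8.
Variable F : finFieldType.
Variables m q : nat.
Hypothesis hm : (0 < m)%N.
Hypothesis hq : q = (3 ^ m)%N.
Hypothesis hF : #|F| = (q ^ 2)%N.
Variables alpha Z : F.
Hypothesis halpha : alpha \in @C1 F q.
Hypothesis hZq : ~~ @inFq F q Z.
Hypothesis hZ2 : Z ^+ 2 = alpha.

Lemma pchar3 : (3%N \in [pchar F])%N.
Proof.
apply: (@card_finPcharP _ _ (m * 2)) => //.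
by rewrite hF hq expnM.
Qed.

Lemma char3 : (3%:R : F) = 0.
Proof. exact: (pcharf0 pchar3). Qed.

Lemma ch3 (L R W : F) : L - R = 3%:R * W -> L = R.
Proof. by rewrite char3 mul0r => /eqP; rewrite subr_eq0 => /eqP. Qed.

Lemma pnat_q : ([pchar F]%R).-nat q.
Proof.
rewrite hq pnatX; apply/orP; left.
by rewrite (pnatE _ (isT : prime 3)) pchar3.
Qed.

Lemma frobD (x y : F) : (x + y) ^+ q = x ^+ q + y ^+ q.
Proof. exact: exprDn_pchar pnat_q. Qed.

Lemma frobN (x : F) : (- x) ^+ q = - x ^+ q.
Proof. exact: exprNn_pchar pnat_q. Qed.

Lemma frobB (x y : F) : (x - y) ^+ q = x ^+ q - y ^+ q.
Proof. by rewrite frobD frobN. Qed.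

Lemma frobK (x : F) : (x ^+ q) ^+ q = x.
Proof. by rewrite -exprM mulnn -hF expf_card. Qed.

Local Notation Fq := (@inFq F q).

Lemma qodd : odd q.
Proof. by rewrite hq oddX orbT. Qed.

Lemma q_gt0 : (0 < q)%N.
Proof. by rewrite hq expn_gt0. Qed.

Lemma FqE x : Fq x = (x ^+ q == x). Proof. by []. Qed.

Lemma Fq0 : Fq 0. Proof. by rewrite FqE expr0n gtn_eqF ?q_gt0. Qed.
Lemma Fq1 : Fq 1. Proof. by rewrite FqE expr1n. Qed.
Lemma FqD x y : Fq x -> Fq y -> Fq (x + y).
Proof. by rewrite !FqE frobD => /eqP-> /eqP->. Qed.
Lemma FqN x : Fq x -> Fq (- x).
Proof. by rewrite !FqE frobN => /eqP->. Qed.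
Lemma FqB x y : Fq x -> Fq y -> Fq (x - y).
Proof. by move=> hx hy; apply: FqD => //; apply: FqN. Qed.
Lemma FqM x y : Fq x -> Fq y -> Fq (x * y).
Proof. by rewrite !FqE exprMn => /eqP-> /eqP->. Qed.
Lemma FqV x : Fq x -> Fq (x^-1).
Proof. by rewrite !FqE exprVn => /eqP->. Qed.
Lemma FqX x k : Fq x -> Fq (x ^+ k).
Proof. by rewrite !FqE -exprM mulnC exprM => /eqP->. Qed.
Lemma Fqn k : Fq (k%:R).
Proof. by elim: k => [|k IH]; rewrite ?Fq0 // -addn1 natrD FqD // Fq1. Qed.
Lemma Fqdiv x y : Fq x -> Fq y -> Fq (x / y).
Proof. by move=> hx hy; rewrite FqM // FqV. Qed.

Lemma two_neq0 : (2%:R : F) != 0.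
Proof.
apply/eqP => h2; have := char3; rewrite -[3%N]/(1 + 2)%N natrD h2 addr0.
by move/eqP; rewrite oner_eq0.
Qed.

Lemma four1 : (4%:R : F) = 1.
Proof. by rewrite -[4%N]/(3 + 1)%N natrD char3 add0r. Qed.

Lemma twoN : (2%:R : F) = -1.
Proof. by apply/eqP; rewrite -subr_eq0 opprK -char3 -[3%N]/(2 + 1)%N natrD. Qed.

Lemma Z_neq0 : Z != 0.
Proof. by apply: contra hZq => /eqP->; apply: Fq0. Qed.

Lemma alphaFq : Fq alpha.
Proof. by move: halpha; rewrite inE => /and3P[]. Qed.
Lemma alpha_neq0 : alpha != 0.
Proof. by move: halpha; rewrite inE => /and3P[]. Qed.
Lemma alpha_nsq y : Fq y -> y ^+ 2 != alpha.
Proof.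
move=> hy; apply/negP => hya; move: halpha; rewrite inE => /and3P[_ _ /negP]; apply.
by apply/existsP; exists y; rewrite hy hya.
Qed.

Lemma ZqN : Z ^+ q = - Z.
Proof.
have h : (Z ^+ q - Z) * (Z ^+ q + Z) = 0.
  have -> : (Z ^+ q - Z) * (Z ^+ q + Z) = (Z ^+ 2) ^+ q - Z ^+ 2.
    by rewrite -exprM mulnC exprM; ring.
  by rewrite hZ2; move: alphaFq; rewrite FqE => /eqP->; rewrite subrr.
move/eqP: h; rewrite mulf_eq0 subr_eq0 => /orP[hZ|]; first by move: hZq; rewrite FqE; move/eqP: hZ => ->; rewrite eqxx.
by rewrite addr_eq0 => /eqP.
Qed.

Definition re (x : F) := - (x + x ^+ q).
Definition im (x : F) := (x ^+ q - x) / Z.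

Lemma Fq_re x : Fq (re x).
Proof. by rewrite FqE /re frobN frobD frobK addrC. Qed.

Lemma Fq_im x : Fq (im x).
Proof.
rewrite FqE /im exprMn exprVn frobB frobK ZqN invrN mulrN -mulNr opprB.
by [].
Qed.

Lemma decomp x : x = re x + im x * Z.
Proof.
rewrite /re /im divfK ?Z_neq0 //.
apply: (@ch3 _ _ x); ring.
Qed.

Lemma uniq2 a c a' c' : Fq a -> Fq c -> Fq a' -> Fq c' ->
  a + c * Z = a' + c' * Z -> a = a' /\ c = c'.
Proof.
move=> ha hc ha' hc' h.
have hcc : c = c'.
  apply/eqP; apply/negPn/negP => hne.
  have e : (c - c') * Z = a' - a.
    by rewrite -[a'](addrK (c' * Z)) -h; ring.
  have hZ : Z = (a' - a) / (c - c').
    by rewrite -e; field; rewrite subr_eq0.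
  by move: hZq; rewrite hZ Fqdiv ?FqB.
by split => //; move: h; rewrite hcc => /addIr.
Qed.


Definition FqS : {set F} := [set x | Fq x].

Lemma card_FqS : #|FqS| = q.
Proof.
pose g := fun p : F * F => p.1 + p.2 * Z.
have inj : {in setX FqS FqS &, injective g}.
  move=> [a c] [a' c']; rewrite !inE /= => /andP[ha hc] /andP[ha' hc'].
  by rewrite /g /= => /uniq2 => /(_ ha hc ha' hc') [-> ->].
have im : g @: setX FqS FqS = setT.
  apply/setP => x; rewrite inE; apply/imsetP; exists (re x, im x).
    by rewrite !inE Fq_re Fq_im.
  by rewrite /g /= -decomp.
have := card_in_imset inj; rewrite im cardsT hF cardsX => h.
apply/eqP; rewrite -(@eqn_exp2r _ _ 2) //; apply/eqP; rewrite h !expnS !expn0 !muln1 //.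
Qed.

Lemma nsq_alpha u : u \in @C1 F q -> exists2 t, Fq t & u = alpha * t ^+ 2.
Proof.
pose Q := @Fqstar F q.
pose Sq := [set y ^+ 2 | y in Q].
have hQ y : (y \in Q) = Fq y && (y != 0) by rewrite inE.
have cardQ : #|Q| = (2 * #|Sq|)%N.
  rewrite -sum1_card (partition_big (fun y => y ^+ 2) (mem Sq)); last first.
    by move=> y hy; apply/imsetP; exists y.
  rewrite mulnC -sum_nat_const; apply: eq_bigr => s /imsetP[y0 hy0 ->].
  rewrite sum1dep_card.
  have -> : [set y | (y \in Q) && (y ^+ 2 == y0 ^+ 2)] = [set y0; - y0].
    apply/setP => y; rewrite !inE.
    apply/andP/orP => [[_ /eqP]|].
      move/eqP; rewrite -subr_eq0 subr_sqr mulf_eq0 subr_eq0 addr_eq0.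
      by case/orP => ->; [left|right].
    move: hy0; rewrite hQ => /andP[hy0 nz].
    by case=> /eqP ->; rewrite ?sqrrN eqxx ?hy0 ?nz ?FqN ?oppr_eq0.
  rewrite cards2; suff -> : (y0 != - y0) by []; apply/eqP => h.
  move: hy0; rewrite hQ => /andP[_ nz].
  have : y0 *+ 2 == 0 by rewrite mulr2n {2}h subrr.
  by rewrite -mulr_natr mulf_eq0 (negPf nz) (negPf two_neq0).
pose NS := Q :\: Sq.
have cardNS : #|NS| = #|Sq|.
  rewrite /NS cardsD (setIidPr _); first by rewrite cardQ mul2n -addnn addnK.
  by apply/subsetP => s /imsetP[y hy ->]; rewrite hQ; move: hy; rewrite hQ =>
    /andP[hy nz]; rewrite FqX ?expf_neq0.
have sub : (fun s => alpha * s) @: Sq \subset NS.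
  apply/subsetP => s /imsetP[s' /imsetP[y hy ->] ->].
  move: hy; rewrite hQ => /andP[hy nz].
  rewrite !inE FqM ?FqX ?alphaFq // mulf_neq0 ?alpha_neq0 ?expf_neq0 // andbT.
  rewrite andbT; apply/negP => /imsetP[w]; rewrite hQ => /andP[hw nzw] e.
  have : (w / y) ^+ 2 == alpha by rewrite expr_div_n -e mulfK ?expf_neq0.
  by apply/negP; apply: alpha_nsq; rewrite Fqdiv.
have eqS : (fun s => alpha * s) @: Sq = NS.
  apply/eqP; rewrite eqEcard sub card_in_imset -?cardNS ?leqnn //.
  by move=> x y _ _ /mulfI; apply; apply: alpha_neq0.
move=> hu.
have : u \in NS.
  move: hu; rewrite !inE => /and3P[hu nz nsq]; rewrite hu nz andbT.
  rewrite andbT; apply/negP => /imsetP[y hy e]; move/negP: nsq; apply; apply/existsP; exists y.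
  by move: hy; rewrite hQ => /andP[-> _]; rewrite e eqxx.
rewrite -eqS => /imsetP[s /imsetP[t ht ->] ->].
by exists t => //; move: ht; rewrite hQ => /andP[].
Qed.


Definition fq (x : F) := x ^+ (q + 2).
Definition G (x : F) := fq x + fq (x + 1).

Lemma fqE x : fq x = x ^+ q * x ^+ 2.
Proof. by rewrite /fq exprD. Qed.

Lemma fqN x : fq (- x) = - fq x.
Proof. by rewrite !fqE frobN sqrrN mulNr. Qed.

Lemma fq_Fq x : Fq x -> fq x = x ^+ 3.
Proof. by rewrite fqE FqE => /eqP->; rewrite -exprS. Qed.

Lemma cube_sub (x y : F) : (x - y) ^+ 3 = x ^+ 3 - y ^+ 3.
Proof. by apply: (@ch3 _ _ (x * y ^+ 2 - x ^+ 2 * y)); ring. Qed.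

Lemma conjA a c : Fq a -> Fq c -> (a + c * Z) ^+ q = a - c * Z.
Proof.
by rewrite !FqE => /eqP ha /eqP hc; rewrite frobD exprMn ha hc ZqN mulrN.
Qed.

Lemma Gform a c : Fq a -> Fq c ->
  G (1 + a + c * Z) = - (a ^+ 3 - alpha * a * c ^+ 2)
                      + (- (c * (a ^+ 2 - alpha * c ^+ 2 + 1))) * Z.
Proof.
move=> ha hc.
have e1 : (1 + a + c * Z) ^+ q = 1 + a - c * Z.
  by rewrite -addrA frobD expr1n conjA // addrA.
have e2 : (1 + a + c * Z + 1) ^+ q = 1 + a - c * Z + 1.
  by rewrite frobD e1 expr1n.
rewrite /G !fqE e1 e2 -hZ2.
apply: (@ch3 _ _ (3%:R + 2%:R*Z*a*c + Z*a^+2*c + 2%:R*Z*c - Z^+2*a*c^+2 - Z^+2*c^+2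
   - Z^+3*c^+3 + 5%:R*a + 3%:R*a^+2 + a^+3)); ring.
Qed.

Lemma g_id x : fq (x + 1) - fq x = 1 - (x - 1) * (x ^+ q - x).
Proof.
rewrite !fqE frobD expr1n.
by apply: (@ch3 _ _ (x ^+ q * x + x)); ring.
Qed.

Definition Sb (b : F) : {set F * F} :=
  [set xy : F * F | (fq xy.1 - fq xy.2 == b) && (fq (xy.1 + 1) - fq (xy.2 + 1) == b)].
Definition T1 (b : F) : {set F * F} :=
  [set xy : F * F | [&& Fq xy.1, Fq xy.2 & ((xy.1 - xy.2) ^+ 3 == b)]].
Definition T2 (b : F) : {set F} := [set x | ~~ Fq x && (G x == b)].

Lemma Sb_mem b x y : b != 0 ->
  ((x, y) \in Sb b) =
  ([&& Fq x, Fq y & ((x - y) ^+ 3 == b)] || [&& ~~ Fq x, y == -1 - x & G x == b]).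
Proof.
move=> bnz; rewrite inE /=.
apply/idP/idP.
- case/andP => /eqP h1 /eqP h2.
  set e1 := x ^+ q - x; set e2 := y ^+ q - y.
  have hH : (x - 1) * e1 = (y - 1) * e2.
    have : fq (x + 1) - fq x = fq (y + 1) - fq y.
      apply/eqP; rewrite -subr_eq0; apply/eqP.
      by transitivity ((fq (x + 1) - fq (y + 1)) - (fq x - fq y)); [ring | rewrite h1 h2 subrr].
    by rewrite !g_id => /addrI /oppr_inj.
  have hHq : (x ^+ q - 1) * (x - x ^+ q) = (y ^+ q - 1) * (y - y ^+ q).
    have := congr1 (fun w => w ^+ q) hH; rewrite /= !exprMn /e1 /e2 !frobB !frobK !expr1n.
    by [].
  have hsq : e1 ^+ 2 = e2 ^+ 2.
    have -> : e1 ^+ 2 = - ((x - 1) * e1 + (x ^+ q - 1) * (x - x ^+ q)) by rewrite /e1; ring.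
    have -> : e2 ^+ 2 = - ((y - 1) * e2 + (y ^+ q - 1) * (y - y ^+ q)) by rewrite /e2; ring.
    by rewrite hH hHq.
  have [he|hne] := eqVneq e1 e2.
    have [e10|e1nz] := eqVneq e1 0.
      have hx : Fq x by rewrite FqE -subr_eq0 -/e1 e10.
      have hy : Fq y by rewrite FqE -subr_eq0 -/e2 -he e10.
      by rewrite hx hy cube_sub -!fq_Fq // h1 eqxx.
    move: hH; rewrite -he => /mulIf => /(_ e1nz) /addIr xy.
    by move: h1; rewrite xy subrr => /esym/eqP; rewrite (negPf bnz).
  have hs : e1 + e2 = 0.
    move/eqP: hsq; rewrite -subr_eq0 subr_sqr mulf_eq0 subr_eq0 (negPf hne) /=.
    by move/eqP.
  have e1nz : e1 != 0.
    by apply: contra hne => /eqP e0; move: hs; rewrite e0 add0r => ->.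
  have he2 : e2 = - e1 by apply/eqP; rewrite -addr_eq0 addrC hs.
  have hy : y = -1 - x.
    move: hH; rewrite he2 mulrN -mulNr => /mulIf => /(_ e1nz) h.
    have -> : y = - (x - 1) + 1 by rewrite h opprK subrK.
    by apply: (@ch3 _ _ 1); ring.
  apply/orP; right; apply/and3P; split.
  + by rewrite FqE -subr_eq0 -/e1.
  + by rewrite hy.
  + by apply/eqP; rewrite /G -h1 hy -opprD fqN opprK (addrC 1 x).
- case/orP.
  + case/and3P => hx hy /eqP hb.
    by rewrite !fq_Fq ?FqD ?Fq1 // -!cube_sub hb opprD addrACA subrr addr0 hb !eqxx.
  + case/and3P => _ /eqP -> /eqP hb.
    have e1 : fq (-1 - x) = - fq (x + 1) by rewrite -opprD fqN addrC.
    have e2 : fq (-1 - x + 1) = - fq x by rewrite (_ : -1 - x + 1 = - x) ?fqN //; ring.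
    by rewrite e1 e2 !opprK -hb /G (addrC (fq (x + 1))) !eqxx.
Qed.


Lemma card_Sb b : b != 0 -> #|Sb b| = (#|T1 b| + #|T2 b|)%N.
Proof.
move=> bnz.
have -> : Sb b = T1 b :|: [set (x, -1 - x) | x in T2 b].
  apply/setP => -[x y]; rewrite Sb_mem // inE; congr (_ || _); first by rewrite inE.
  apply/and3P/imsetP => [[hx /eqP hy hG]|[x' hx' [-> ->]]].
    by exists x; rewrite ?inE ?hx ?hG // hy.
  by move: hx'; rewrite inE => /andP[-> ->].
rewrite cardsU card_imset; last by move=> x x' [].
have -> : T1 b :&: [set (x, -1 - x) | x in T2 b] = set0.
  apply/setP => -[x y]; rewrite !inE; apply/negP => /andP[/and3P[hx _ _]].
  by case/imsetP => x' hx' [ex _]; move: hx'; rewrite inE -ex hx.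
by rewrite cards0 subn0.
Qed.

Lemma card_T1 b : #|T1 b| = if Fq b then q else 0%N.
Proof.
case: ifP => hb; last first.
  apply/eqP; rewrite cards_eq0; apply/eqP/setP => -[x y]; rewrite !inE /=.
  apply/negP => /and3P[hx hy /eqP e]; move: hb; rewrite -e FqX ?FqB //.
pose t := b ^+ (3 ^ m.-1).
have t3 : t ^+ 3 = b.
  rewrite /t -exprM -expnSr prednK //.
  by rewrite -hq; move: hb; rewrite FqE => /eqP.
have ht : Fq t.
  by rewrite FqE /t -exprM mulnC exprM; move: hb; rewrite FqE => /eqP->.
have -> : T1 b = [set (y + t, y) | y in FqS].
  apply/setP => -[x y]; rewrite !inE /=; apply/and3P/imsetP.
    move=> [hx hy /eqP e]; exists y; first by rewrite inE.
    congr (_, _).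
    have : (x - y - t) ^+ 3 = 0 by rewrite cube_sub e t3 subrr.
    by move/eqP; rewrite expf_eq0 /= subr_eq0 => /eqP <-; rewrite addrC subrK.
  move=> [y' hy' [-> ->]]; move: hy'; rewrite inE => hy'.
  by split; rewrite ?FqD // (addrC y' t) addrK t3.
by rewrite card_imset ?card_FqS // => y y' [].
Qed.


Lemma ch3' (L R W Q : F) : Q = 0 -> L - R = 3%:R * W - Q -> L = R.
Proof. by move=> -> h; apply: (@ch3 _ _ W); rewrite h subr0. Qed.

Lemma lin0 (L R Q : F) : Q = 0 -> L - R = Q -> L = R.
Proof. by move=> -> /eqP; rewrite subr_eq0 => /eqP. Qed.

Definition PP (Cc Aa n : F) := (n ^+ 3 - Cc) * (n + 1) ^+ 2 + Aa * n ^+ 2.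

Lemma PPx Cc Aa n : PP Cc Aa n = n^+5 - n^+4 + n^+3 + (Aa - Cc) * n^+2 + Cc * n - Cc.
Proof. by rewrite /PP; apply: (@ch3 _ _ (- Cc * n + n ^+ 4)); ring. Qed.

Definition s1 (r1 r2 r3 r4 r5 : F) := r1 + r2 + r3 + r4 + r5.
Definition s2 (r1 r2 r3 r4 r5 : F) :=
  r1*r2 + r1*r3 + r1*r4 + r1*r5 + r2*r3 + r2*r4 + r2*r5 + r3*r4 + r3*r5 + r4*r5.
Definition s3 (r1 r2 r3 r4 r5 : F) :=
  r1*r2*r3 + r1*r2*r4 + r1*r2*r5 + r1*r3*r4 + r1*r3*r5 + r1*r4*r5
  + r2*r3*r4 + r2*r3*r5 + r2*r4*r5 + r3*r4*r5.
Definition s4 (r1 r2 r3 r4 r5 : F) :=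
  r1*r2*r3*r4 + r1*r2*r3*r5 + r1*r2*r4*r5 + r1*r3*r4*r5 + r2*r3*r4*r5.
Definition s5 (r1 r2 r3 r4 r5 : F) := r1*r2*r3*r4*r5.

Definition symh Cc Aa (r1 r2 r3 r4 r5 : F) :=
  [/\ s1 r1 r2 r3 r4 r5 = 1, s2 r1 r2 r3 r4 r5 = 1, s3 r1 r2 r3 r4 r5 = Cc - Aa,
      s4 r1 r2 r3 r4 r5 = Cc & s5 r1 r2 r3 r4 r5 = Cc].

Lemma prod5 (n r1 r2 r3 r4 r5 : F) :
  (n - r1) * (n - r2) * (n - r3) * (n - r4) * (n - r5) =
  n^+5 - s1 r1 r2 r3 r4 r5 * n^+4 + s2 r1 r2 r3 r4 r5 * n^+3 - s3 r1 r2 r3 r4 r5 * n^+2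
  + s4 r1 r2 r3 r4 r5 * n - s5 r1 r2 r3 r4 r5.
Proof. by rewrite /s1 /s2 /s3 /s4 /s5; ring. Qed.

Lemma root_prod Cc Aa r1 r2 r3 r4 r5 n : symh Cc Aa r1 r2 r3 r4 r5 ->
  PP Cc Aa n = (n - r1) * (n - r2) * (n - r3) * (n - r4) * (n - r5).
Proof.
by case=> h1 h2 h3 h4 h5; rewrite prod5 h1 h2 h3 h4 h5 PPx; ring.
Qed.

Lemma symh_perm Cc Aa r1 r2 r3 r4 r5 : symh Cc Aa r1 r2 r3 r4 r5 ->
  symh Cc Aa r2 r1 r3 r4 r5 /\ symh Cc Aa r3 r2 r1 r4 r5 /\
  symh Cc Aa r4 r2 r3 r1 r5 /\ symh Cc Aa r5 r2 r3 r4 r1.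
Proof.
case=> h1 h2 h3 h4 h5.
by split; [|split; [|split]]; split;
  [rewrite -h1|rewrite -h2|rewrite -h3|rewrite -h4|rewrite -h5|
   rewrite -h1|rewrite -h2|rewrite -h3|rewrite -h4|rewrite -h5|
   rewrite -h1|rewrite -h2|rewrite -h3|rewrite -h4|rewrite -h5|
   rewrite -h1|rewrite -h2|rewrite -h3|rewrite -h4|rewrite -h5];
  rewrite /s1 /s2 /s3 /s4 /s5; ring.
Qed.

Lemma per_root Cc Aa r1 r2 r3 r4 r5 : symh Cc Aa r1 r2 r3 r4 r5 ->
  (r1 + 1) * ((r1 - r2) * (r1 - r3) * (r1 - r4) * (r1 - r5)) = - Aa * r1.
Proof.
move=> hs; have hP : PP Cc Aa r1 = 0 by rewrite (root_prod _ hs) subrr !mul0r.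
rewrite PPx in hP.
have hd : (r1 - r2) * (r1 - r3) * (r1 - r4) * (r1 - r5) =
   5%:R * r1^+4 - 4%:R * s1 r1 r2 r3 r4 r5 * r1^+3 + 3%:R * s2 r1 r2 r3 r4 r5 * r1^+2
   - 2%:R * s3 r1 r2 r3 r4 r5 * r1 + s4 r1 r2 r3 r4 r5.
  by rewrite /s1 /s2 /s3 /s4; ring.
case: hs => h1 h2 h3 h4 h5.
rewrite hd h1 h2 h3 h4.
apply: (ch3' (W := Aa*r1 + Aa*r1^+2 - Cc*r1^+2 + r1^+2 + 2%:R*r1^+5) hP); ring.
Qed.

Lemma disc_abstract (p1 p2 p3 p4 p5 D1 D2 D3 D4 D5 r1 r2 r3 r4 r5 a c : F) :
  a != 0 -> p1 * p2 * p3 * p4 * p5 = - a -> r1 * r2 * r3 * r4 * r5 = c ->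
  p1 * D1 = - a * r1 -> p2 * D2 = - a * r2 -> p3 * D3 = - a * r3 ->
  p4 * D4 = - a * r4 -> p5 * D5 = - a * r5 ->
  D1 * D2 * D3 * D4 * D5 = c * a ^+ 4.
Proof.
move=> anz hp hr h1 h2 h3 h4 h5.
have e : (p1 * p2 * p3 * p4 * p5) * (D1 * D2 * D3 * D4 * D5) =
         (p1 * D1) * (p2 * D2) * (p3 * D3) * (p4 * D4) * (p5 * D5) by ring.
rewrite hp h1 h2 h3 h4 h5 in e.
have e2 : - a * (D1 * D2 * D3 * D4 * D5) = - a * (c * a ^+ 4).
  by rewrite e -hr; ring.
by move/mulfI: e2; apply; rewrite oppr_eq0.
Qed.

Lemma orient (d12 d13 d14 d15 d23 d24 d25 d34 d35 d45 : F) :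
  (d12*d13*d14*d15*d23*d24*d25*d34*d35*d45) ^+ 2 =
  (d12*d13*d14*d15) * ((-d12)*d23*d24*d25) * ((-d13)*(-d23)*d34*d35)
  * ((-d14)*(-d24)*(-d34)*d45) * ((-d15)*(-d25)*(-d35)*(-d45)).
Proof. ring. Qed.

Definition disc5 (r1 r2 r3 r4 r5 : F) :=
  ((r1-r2)*(r1-r3)*(r1-r4)*(r1-r5)*(r2-r3)*(r2-r4)*(r2-r5)*(r3-r4)*(r3-r5)*(r4-r5)) ^+ 2.

Lemma disc5E Cc Aa r1 r2 r3 r4 r5 : Aa != 0 -> symh Cc Aa r1 r2 r3 r4 r5 ->
  disc5 r1 r2 r3 r4 r5 = Cc * Aa ^+ 4.
Proof.
move=> anz hs.
have [hs2 [hs3 [hs4 hs5]]] := symh_perm hs.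
rewrite /disc5 orient; apply: (disc_abstract (p1 := r1 + 1) (p2 := r2 + 1) (p3 := r3 + 1)
   (p4 := r4 + 1) (p5 := r5 + 1) (r1 := r1) (r2 := r2) (r3 := r3) (r4 := r4) (r5 := r5)) => //.
- case: hs => h1 h2 h3 h4 h5.
  have e : (r1 + 1) * (r2 + 1) * (r3 + 1) * (r4 + 1) * (r5 + 1) =
    1 + s1 r1 r2 r3 r4 r5 + s2 r1 r2 r3 r4 r5 + s3 r1 r2 r3 r4 r5 + s4 r1 r2 r3 r4 r5
    + s5 r1 r2 r3 r4 r5 by rewrite /s1 /s2 /s3 /s4 /s5; ring.
  rewrite e h1 h2 h3 h4 h5; apply: (@ch3 _ _ (1 + Cc)); ring.
- by case: hs.
- exact: per_root hs.
- by rewrite -(per_root hs2); ring.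
- by rewrite -(per_root hs3); ring.
- by rewrite -(per_root hs4); ring.
- by rewrite -(per_root hs5); ring.
Qed.


Lemma quad3 (a2 a1 a0 r1 r2 r3 : F) : r1 != r2 -> r1 != r3 -> r2 != r3 ->
  a2 * r1 ^+ 2 + a1 * r1 + a0 = 0 -> a2 * r2 ^+ 2 + a1 * r2 + a0 = 0 ->
  a2 * r3 ^+ 2 + a1 * r3 + a0 = 0 -> [/\ a2 = 0, a1 = 0 & a0 = 0].
Proof.
move=> n12 n13 n23 e1 e2 e3.
have f12 : (r1 - r2) * (a2 * (r1 + r2) + a1) = 0.
  by rewrite -[RHS](subrr 0) -{1}e1 -e2; ring.
have f13 : (r1 - r3) * (a2 * (r1 + r3) + a1) = 0.
  by rewrite -[RHS](subrr 0) -{1}e1 -e3; ring.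
move/eqP: f12; rewrite mulf_eq0 subr_eq0 (negPf n12) /= => /eqP g12.
move/eqP: f13; rewrite mulf_eq0 subr_eq0 (negPf n13) /= => /eqP g13.
have : a2 * (r2 - r3) = 0 by rewrite -[RHS](subrr 0) -{1}g12 -g13; ring.
move/eqP; rewrite mulf_eq0 subr_eq0 (negPf n23) orbF => /eqP ha2.
have ha1 : a1 = 0 by rewrite -g12 ha2; ring.
split => //; by rewrite -e1 ha2 ha1; ring.
Qed.

Lemma fact3 Cc Aa r1 r2 r3 u v r4 r5 : r1 != r2 -> r1 != r3 -> r2 != r3 ->
  PP Cc Aa r1 = 0 -> PP Cc Aa r2 = 0 -> PP Cc Aa r3 = 0 ->
  u = r1 + r2 + r3 - 1 -> v = 1 - (r1 * r2 + r1 * r3 + r2 * r3) + (r1 + r2 + r3) * u ->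
  r4 + r5 = - u -> r4 * r5 = v -> symh Cc Aa r1 r2 r3 r4 r5.
Proof.
move=> n12 n13 n23 p1 p2 p3 hu hv h45 p45.
pose e1 := r1 + r2 + r3; pose e2 := r1 * r2 + r1 * r3 + r2 * r3; pose e3 := r1 * r2 * r3.
pose a2 := Aa - Cc + (e3 - e2 * u + e1 * v).
pose a1 := Cc - (- e3 * u + e2 * v).
pose a0 := e3 * v - Cc.
have key n : PP Cc Aa n - (n - r1) * (n - r2) * (n - r3) * (n ^+ 2 + u * n + v)
             = a2 * n ^+ 2 + a1 * n + a0.
  by rewrite PPx /a2 /a1 /a0 /e1 /e2 /e3 hv hu; ring.
have z1 : a2 * r1 ^+ 2 + a1 * r1 + a0 = 0 by rewrite -key p1 subrr !mul0r subr0.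
have z2 : a2 * r2 ^+ 2 + a1 * r2 + a0 = 0 by rewrite -key p2 subrr mulr0 !mul0r subr0.
have z3 : a2 * r3 ^+ 2 + a1 * r3 + a0 = 0 by rewrite -key p3 subrr mulr0 !mul0r subr0.
have [ha2 ha1 ha0] := quad3 n12 n13 n23 z1 z2 z3.
have E1 : s1 r1 r2 r3 r4 r5 = e1 + (r4 + r5) by rewrite /s1 /e1; ring.
have E2 : s2 r1 r2 r3 r4 r5 = e2 + e1 * (r4 + r5) + r4 * r5 by rewrite /s2 /e1 /e2; ring.
have E3 : s3 r1 r2 r3 r4 r5 = e3 + e2 * (r4 + r5) + e1 * (r4 * r5)
  by rewrite /s3 /e1 /e2 /e3; ring.
have E4 : s4 r1 r2 r3 r4 r5 = e3 * (r4 + r5) + e2 * (r4 * r5) by rewrite /s4 /e2 /e3; ring.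
have E5 : s5 r1 r2 r3 r4 r5 = e3 * (r4 * r5) by rewrite /s5 /e3; ring.
split.
- by rewrite E1 h45 hu /e1; ring.
- by rewrite E2 h45 p45 hv /e1 /e2; ring.
- by rewrite E3 h45 p45; apply: (lin0 ha2); rewrite /a2; ring.
- have ha1' : - a1 = 0 by rewrite ha1 oppr0.
  by rewrite E4 h45 p45; apply: (lin0 ha1'); rewrite /a1; ring.
- by rewrite E5 p45; apply: (lin0 ha0); rewrite /a0; ring.
Qed.


Lemma Fq_lin a c : Fq a -> Fq c -> Fq (a + c * Z) = (c == 0).
Proof.
move=> ha hc; apply/idP/eqP => [h|->]; last by rewrite mul0r addr0.
have := @uniq2 (a + c * Z) 0 a c h Fq0 ha hc; rewrite mul0r addr0.
by case=> // _ <-.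
Qed.

Lemma T2_fwd b1 b2 x : Fq b1 -> Fq b2 -> x \in T2 (b1 + b2 * Z) ->
  let a := re (x - 1) in let c := im (x - 1) in
  [/\ c != 0, x = 1 + a + c * Z, - (a ^+ 3 - alpha * a * c ^+ 2) = b1
    & - (c * (a ^+ 2 - alpha * c ^+ 2 + 1)) = b2].
Proof.
move=> hb1 hb2; rewrite inE => /andP[hx /eqP hG] a c.
have ha : Fq a := Fq_re _. have hc : Fq c := Fq_im _.
have ex : x = 1 + a + c * Z by rewrite -addrA -decomp addrC subrK.
have cnz : c != 0.
  apply: contra hx => /eqP c0; rewrite ex c0 mul0r addr0 FqD ?Fq1 //.
move: hG; rewrite ex Gform // => /uniq2 [].
- by rewrite FqN // FqB ?FqX // FqM ?FqX // FqM // alphaFq.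
- by rewrite FqN // FqM // FqD ?Fq1 // FqB ?FqX // FqM ?FqX // alphaFq.
- by [].
- by [].
by move=> e1 e2; split.
Qed.

Lemma T2_bwd b1 b2 a c : Fq a -> Fq c -> c != 0 ->
  - (a ^+ 3 - alpha * a * c ^+ 2) = b1 -> - (c * (a ^+ 2 - alpha * c ^+ 2 + 1)) = b2 ->
  1 + a + c * Z \in T2 (b1 + b2 * Z).
Proof.
move=> ha hc cnz e1 e2; rewrite inE Gform // e1 e2 eqxx andbT.
by rewrite Fq_lin ?FqD ?Fq1.

Qed.


Lemma FqA_fwd x b1 b2 : Fq b1 -> Fq b2 -> x \in T2 (b1 + b2 * Z) ->
  exists a c, [/\ Fq a, Fq c, c != 0, x = 1 + a + c * Z &
     - (a ^+ 3 - alpha * a * c ^+ 2) = b1 /\ - (c * (a ^+ 2 - alpha * c ^+ 2 + 1)) = b2].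
Proof.
move=> h1 h2 /(T2_fwd h1 h2) [cnz ex e1 e2].
by exists (re (x - 1)), (im (x - 1)); split => //; [apply: Fq_re | apply: Fq_im].
Qed.

Lemma part1 c0 : Fq c0 -> c0 != 0 ->
  #|T2 c0| = if c0 ^+ 2 + 1 \in @C1 F q then 2%N else 0%N.
Proof.
move=> hc0 c0nz.
have eT : T2 c0 = T2 (c0 + 0 * Z) by rewrite mul0r addr0.
have fwd x : x \in T2 c0 -> exists c, [/\ Fq c, c != 0, x = 1 + c0 + c * Z &
                                          alpha * c ^+ 2 = c0 ^+ 2 + 1].
  rewrite eT => /FqA_fwd => /(_ hc0 Fq0) [a [c [ha hc cnz ex [e1 e2]]]].
  have hn : a ^+ 2 - alpha * c ^+ 2 + 1 = 0.
    by move/eqP: e2; rewrite oppr_eq0 mulf_eq0 (negPf cnz) /= => /eqP.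
  have hn' : a ^+ 2 - alpha * c ^+ 2 = -1 by rewrite -(addrK 1 (_ - _)) hn sub0r.
  have ea : a = c0.
    rewrite -e1 (_ : a ^+ 3 - alpha * a * c ^+ 2 = a * (a ^+ 2 - alpha * c ^+ 2)); last by ring.
    by rewrite hn' mulrN1 opprK.
  exists c; split => //; first by rewrite ex ea.
  have hn2 : - (a ^+ 2 - alpha * c ^+ 2 + 1) = 0 by rewrite hn oppr0.
  by rewrite -ea; apply: (lin0 hn2); ring.
case: ifP => hC1; last first.
  apply/eqP; rewrite cards_eq0; apply/eqP/setP => x; rewrite in_set0.
  apply/negP => /fwd [c [hc cnz _ e]]; move/negP: hC1; apply.
  rewrite inE -e FqM ?FqX ?alphaFq // mulf_neq0 ?alpha_neq0 ?expf_neq0 //=.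
  apply/negP => /existsP [y /andP[hy /eqP ey]].
  have : (y / c) ^+ 2 == alpha by rewrite expr_div_n ey mulfK ?expf_neq0.
  by apply/negP; apply: alpha_nsq; rewrite Fqdiv.
have [t ht et] := nsq_alpha hC1.
have tnz : t != 0.
  by apply/eqP => t0; move: hC1; rewrite inE et t0 expr0n mulr0 eqxx /= andbF.
have -> : T2 c0 = [set 1 + c0 + t * Z; 1 + c0 + (- t) * Z].
  apply/setP => x; rewrite in_set2; apply/idP/orP.
    move/fwd => [c [hc cnz -> e]].
    have : (c - t) * (c + t) = 0.
      rewrite -subr_sqr; apply: (mulfI alpha_neq0).
      by rewrite mulrBr e -et subrr mulr0.
    move/eqP; rewrite mulf_eq0 subr_eq0 addr_eq0 => /orP [] /eqP ->; by [left | right].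
  have bw c : Fq c -> c != 0 -> alpha * c ^+ 2 = c0 ^+ 2 + 1 -> 1 + c0 + c * Z \in T2 c0.
    move=> hc cnz e; rewrite eT; apply: T2_bwd => //.
      rewrite (_ : c0 ^+ 3 - alpha * c0 * c ^+ 2 = c0 * (c0 ^+ 2 - alpha * c ^+ 2)); last by ring.
      by rewrite e opprD addNKr mulrN1 opprK.
    by rewrite e opprD addNKr addNr mulr0 oppr0.
  case=> /eqP ->.
    by apply: bw => //; rewrite et.
  by apply: bw; rewrite ?FqN ?oppr_eq0 // sqrrN et.
rewrite cards2.
suff -> : (1 + c0 + t * Z != 1 + c0 + (- t) * Z) by [].
apply/negP => /eqP /addrI /eqP; rewrite mulNr -addr_eq0 -mulr2n -mulr_natr.
by rewrite !mulf_eq0 (negPf tnz) (negPf Z_neq0) (negPf two_neq0).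
Qed.


Lemma phi_inj c c' : Fq c -> Fq c' ->
  alpha * c ^+ 3 - c = alpha * c' ^+ 3 - c' -> c = c'.
Proof.
move=> hc hc' e; apply/eqP; apply/negPn/negP => ne.
have : alpha * (c - c') ^+ 3 = c - c'.
  rewrite cube_sub; apply/eqP; rewrite -subr_eq0; apply/eqP.
  by rewrite -[RHS](subrr 0) -{1}(subrr (alpha * c' ^+ 3 - c')) -{1}e; ring.
rewrite -subr_eq0 in ne.
move=> h; have h2 : alpha * (c - c') ^+ 2 = 1.
  by apply: (mulfI ne); rewrite mulr1 -[RHS]h; ring.
have : ((c - c')^-1) ^+ 2 == alpha.
  by rewrite exprVn -[alpha](mulfK (expf_neq0 2 ne)) h2 mul1r.
by apply/negP; apply: alpha_nsq; rewrite FqV ?FqB.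
Qed.

Lemma phi_surj d : Fq d -> exists2 c, Fq c & alpha * c ^+ 3 - c = d.
Proof.
move=> hd.
pose phi := fun c : F => alpha * c ^+ 3 - c.
have sub : phi @: FqS \subset FqS.
  apply/subsetP => y /imsetP [c]; rewrite !inE => hc ->.
  by rewrite /phi FqB // FqM ?FqX // alphaFq.
have eqS : phi @: FqS = FqS.
  apply/eqP; rewrite eqEcard sub card_in_imset ?leqnn //.
  by move=> c c'; rewrite !inE => hc hc'; apply: phi_inj.
have : d \in phi @: FqS by rewrite eqS inE.
by case/imsetP => c; rewrite inE => hc ->; exists c.
Qed.

Lemma part2 d : Fq d -> d != 0 -> #|T2 (d * Z)| = 1%N.
Proof.
move=> hd dnz.
have [c hc ec] := phi_surj hd.
have eT : T2 (d * Z) = T2 (0 + d * Z) by rewrite add0r.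
have cnz : c != 0 by apply: contra dnz => /eqP c0; rewrite -ec c0 expr0n mulr0 subrr.
suff -> : T2 (d * Z) = [set 1 + 0 + c * Z] by rewrite cards1.
apply/setP => x; rewrite in_set1; apply/idP/eqP.
  rewrite eT => /FqA_fwd => /(_ Fq0 hd) [a [c' [ha hc' cnz' -> [e1 e2]]]].
  have a0 : a = 0.
    move/eqP: e1; rewrite oppr_eq0.
    rewrite (_ : a ^+ 3 - alpha * a * c' ^+ 2 = a * (a ^+ 2 - alpha * c' ^+ 2)); last by ring.
    rewrite mulf_eq0 subr_eq0 => /orP [/eqP //|/eqP e].
    have : (a / c') ^+ 2 == alpha by rewrite expr_div_n e mulfK ?expf_neq0.
    by move/negP: (alpha_nsq (Fqdiv ha hc')).
  have : c' = c.
    apply: phi_inj => //; rewrite ec -e2 a0; ring.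
  by move=> ->; rewrite a0.
move=> ->; rewrite eT; apply: T2_bwd => //; first by rewrite Fq0.
  by rewrite expr0n mulr0 mul0r subrr oppr0.
by rewrite -ec; ring.
Qed.


Definition Rset (Cc Aa : F) : {set F} := [set n | Fq n && (PP Cc Aa n == 0)].

Lemma rearr (d12 d13 d14 d15 d23 d24 d25 d34 d35 d45 : F) :
  d12*d13*d14*d15*d23*d24*d25*d34*d35*d45 =
  (d12*d13*d23) * (d14*d15) * (d24*d25) * (d34*d35) * d45.
Proof. ring. Qed.

Ltac fqt := repeat first [ apply: FqD | apply: FqM | apply: FqN | apply: FqX | apply: FqV
  | apply: Fq1 | apply: Fq0 | apply: alphaFq | assumption ].

Lemma disc5_uniq (r1 r2 r3 r4 r5 : F) : disc5 r1 r2 r3 r4 r5 != 0 ->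
  uniq [:: r1; r2; r3; r4; r5].
Proof.
move=> h; rewrite /= !inE !negb_or !andbT.
repeat (apply/andP; split);
  apply: contraNneq h => e; rewrite /disc5 e subrr ?(mul0r, mulr0) expr0n //.
Qed.

Lemma cardR c0 d : Fq c0 -> c0 != 0 -> Fq d -> d != 0 ->
  #|Rset (c0 ^+ 2) (alpha * d ^+ 2)| \in [:: 0; 1; 2; 5]%N.
Proof.
move=> hc0 c0nz hd dnz.
set Cc := c0 ^+ 2; set Aa := alpha * d ^+ 2; set R := Rset Cc Aa.
have Anz : Aa != 0 by rewrite mulf_neq0 ?alpha_neq0 ?expf_neq0.
have Cnz : Cc != 0 by rewrite expf_neq0.
have hDnz : Cc * Aa ^+ 4 != 0 by rewrite mulf_neq0 ?expf_neq0.
case: (leqP #|R| 2) => [le2|gt2].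
  by move: le2; case: #|R| => [|[|[|]]].
have [r1 hr1] : exists r1, r1 \in R by apply/card_gt0P; apply: leq_trans gt2.
have [r2 hr2] : exists r2, r2 \in R :\ r1.
  by apply/card_gt0P; move: gt2; rewrite (cardsD1 r1 R) hr1 add1n ltnS; apply: leq_trans.
have [r3 hr3] : exists r3, r3 \in R :\ r1 :\ r2.
  apply/card_gt0P; move: gt2; rewrite (cardsD1 r1 R) hr1 (cardsD1 r2 (R :\ r1)) hr2.
  by rewrite !add1n !ltnS.
move: hr2 hr3; rewrite !inE => /andP [n21 hr2] /and3P [n32 n31 hr3].
move: hr1 hr2 hr3; rewrite !inE => /andP [f1 /eqP p1] /andP [f2 /eqP p2] /andP [f3 /eqP p3].
pose u := r1 + r2 + r3 - 1.
pose v := 1 - (r1 * r2 + r1 * r3 + r2 * r3) + (r1 + r2 + r3) * u.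
have fu : Fq u by rewrite /u; fqt.
have fv : Fq v by rewrite /v; fqt.
have n12 : r1 != r2 by rewrite eq_sym.
have n13 : r1 != r3 by rewrite eq_sym.
have n23 : r2 != r3 by rewrite eq_sym.
have hsym r4 r5 : r4 + r5 = - u -> r4 * r5 = v -> symh Cc Aa r1 r2 r3 r4 r5.
  by move=> h1 h2; apply: (fact3 n12 n13 n23 p1 p2 p3).
have [sq|nsq] := boolP (@sqFq F q (u ^+ 2 - v)).
  case/existsP: sq => s /andP [fs /eqP es].
  have hs : symh Cc Aa r1 r2 r3 (u - s) (u + s).
    apply: hsym.
      by apply: (@ch3 _ _ u); ring.
    by rewrite -subr_sqr es; ring.
  have hD := disc5E Anz hs.
  have hU : uniq [:: r1; r2; r3; u - s; u + s] by apply: disc5_uniq; rewrite hD.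
  have eR : R =i [:: r1; r2; r3; u - s; u + s].
    move=> n; rewrite !inE; apply/andP/idP.
      case=> _; rewrite (root_prod _ hs) !mulf_eq0 !subr_eq0.
      by rewrite -!orbA.
    have hP n' : PP Cc Aa n' = (n' - r1) * (n' - r2) * (n' - r3) * (n' - (u - s)) * (n' - (u + s)).
      exact: root_prod hs.
    case/orP => [/eqP->|/orP[/eqP->|/orP[/eqP->|/orP[/eqP->|/eqP->]]]]; rewrite hP ?subrr ?(mulr0, mul0r) eqxx; split => //; fqt.
  by rewrite (eq_card eR) (card_uniqP hU).
have fdel : Fq (u ^+ 2 - v) by fqt.
have hdel : u ^+ 2 - v \in @C1 F q.
  rewrite inE fdel nsq andbT; apply: contra nsq => /eqP ->.
  by apply/existsP; exists 0; rewrite Fq0 expr0n eqxx.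
have [t ft et] := nsq_alpha hdel.
have hs : symh Cc Aa r1 r2 r3 (u - t * Z) (u + t * Z).
  apply: hsym.
    by apply: (@ch3 _ _ u); ring.
  rewrite -subr_sqr exprMn hZ2 (mulrC (t ^+ 2)) -et; ring.
have hD := disc5E Anz hs.
have hN r : (r - (u - t * Z)) * (r - (u + t * Z)) = (r - u) ^+ 2 - alpha * t ^+ 2.
  by rewrite -hZ2; ring.
have h45 : (u - t * Z - (u + t * Z)) ^+ 2 = alpha * t ^+ 2.
  by rewrite -hZ2; apply: (@ch3 _ _ (t ^+ 2 * Z ^+ 2)); ring.
move: hD; rewrite /disc5 rearr !hN exprMn h45.
set X := (_ * _ * _ * _ * _); move=> hD.
have fX : Fq X by rewrite /X; fqt.
have e : (c0 * Aa ^+ 2) ^+ 2 = alpha * (X * t) ^+ 2.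
  by rewrite /Cc in hD; rewrite exprMn -exprM -hD; ring.
have Xt : X * t != 0.
  apply: contra hDnz => /eqP h0.
  have -> : Cc * Aa ^+ 4 = (c0 * Aa ^+ 2) ^+ 2 by rewrite /Cc; ring.
  by rewrite e h0 expr0n mulr0.
have : (c0 * Aa ^+ 2 / (X * t)) ^+ 2 == alpha.
  by rewrite expr_div_n e mulfK ?expf_neq0.
move=> hy; have fy : Fq (c0 * Aa ^+ 2 / (X * t)) by rewrite /Aa; fqt.
by have := alpha_nsq fy; rewrite hy.
Qed.



Lemma part3 c0 d : Fq c0 -> c0 != 0 -> Fq d -> d != 0 ->
  #|T2 (c0 + d * Z)| = #|Rset (c0 ^+ 2) (alpha * d ^+ 2)|.
Proof.
move=> hc0 c0nz hd dnz.
pose g := fun n : F => 1 + (- c0 / n) + (- d / (n + 1)) * Z.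
have inRnz n : n \in Rset (c0 ^+ 2) (alpha * d ^+ 2) -> [/\ Fq n, n != 0 & n + 1 != 0].
  rewrite inE => /andP [fn /eqP pn]; split => //.
    apply/eqP => n0; move: pn; rewrite n0 (_ : PP _ _ 0 = - c0 ^+ 2); last by rewrite /PP; ring.
    by move/eqP; rewrite oppr_eq0 expf_eq0 (negPf c0nz) andbF.
  apply/eqP => e; have n1 : n = -1 by rewrite -(addrK 1 n) e sub0r.
  move: pn; rewrite n1 (_ : PP _ _ (-1) = alpha * d ^+ 2); last by rewrite /PP; ring.
  by move/eqP; rewrite mulf_eq0 (negPf alpha_neq0) expf_eq0 (negPf dnz) andbF.
have -> : T2 (c0 + d * Z) = g @: Rset (c0 ^+ 2) (alpha * d ^+ 2).
  apply/setP => x; apply/idP/imsetP.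
    case/FqA_fwd => // a [c [ha hc cnz -> [e1 e2]]].
    pose n := a ^+ 2 - alpha * c ^+ 2.
    have hc0' : c0 = - (a * n) by rewrite -e1 /n; ring.
    have hd' : d = - (c * (n + 1)) by rewrite -e2 /n.
    have nnz : n != 0 by apply: contra c0nz => /eqP n0; rewrite hc0' n0 mulr0 oppr0.
    have n1nz : n + 1 != 0 by apply: contra dnz => /eqP n0; rewrite hd' n0 mulr0 oppr0.
    exists n.
      rewrite inE; apply/andP; split; first by rewrite /n; fqt.
      have -> : PP (c0 ^+ 2) (alpha * d ^+ 2) n =
          n ^+ 2 * (n + 1) ^+ 2 * (n - (a ^+ 2 - alpha * c ^+ 2)) by rewrite /PP hc0' hd'; ring.
      by rewrite /n subrr mulr0.
    rewrite /g hc0' hd' !mulNr !opprK mulfK // mulfK //.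
  case=> n hnR ->; have [fn nnz n1nz] := inRnz n hnR.
  move: hnR; rewrite inE => /andP [_ /eqP pn].
  pose a := - c0 / n; pose c := - d / (n + 1).
  have fa : Fq a by rewrite /a; fqt.
  have fc : Fq c by rewrite /c; fqt.
  have cnz : c != 0 by rewrite /c mulf_neq0 ?oppr_eq0 ?invr_eq0.
  have hn : a ^+ 2 - alpha * c ^+ 2 = n.
    have key : a ^+ 2 - alpha * c ^+ 2 - n =
               - PP (c0 ^+ 2) (alpha * d ^+ 2) n / (n ^+ 2 * (n + 1) ^+ 2).
      by rewrite /a /c /PP; field; rewrite ?nnz ?n1nz.
    by apply/eqP; rewrite -subr_eq0 key pn oppr0 mul0r.
  have e1 : - (a ^+ 3 - alpha * a * c ^+ 2) = c0.
    rewrite (_ : a ^+ 3 - alpha * a * c ^+ 2 = a * (a ^+ 2 - alpha * c ^+ 2)); last by ring.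
    by rewrite hn /a divfK // opprK.
  have e2 : - (c * (a ^+ 2 - alpha * c ^+ 2 + 1)) = d.
    by rewrite hn /c divfK // opprK.
  exact: T2_bwd fa fc cnz e1 e2.
rewrite card_in_imset // => n n' /inRnz [fn nnz _] /inRnz [fn' nnz' _].
rewrite /g => /uniq2 [] //; try fqt.
move=> /addrI /eqP; rewrite !mulNr eqr_opp => /eqP /(mulfI c0nz) /invr_inj.
by move=> -> _.
Qed.


Lemma main_sec :
  let f := fun x : F => x ^+ (q + 2) in
  let beta := fun b : F => betaf f 1 (b / 4%:R) in
  (forall c : F, c \in @Fqstar F q ->
     beta c = (if c ^+ 2 + 1 \in @C1 F q then (q + 2)%N else q))
  /\ ((forall d : F, d \in @Fqstar F q -> beta (d * Z) = 1%N) /\ (0 < nu f 1)%N)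
  /\ (forall c d : F, c \in @Fqstar F q -> d \in @Fqstar F q ->
        beta (c + d * Z) \in [:: 0%N; 1%N; 2%N; 5%N]).
Proof.
move=> f beta.
have eb b : beta b = #|Sb b| by rewrite /beta four1 divr1.
have dZnz d : d != 0 -> d * Z != 0 by move=> dnz; rewrite mulf_neq0 ?Z_neq0.
have dZnFq d : Fq d -> d != 0 -> Fq (d * Z) = false.
  by move=> hd dnz; rewrite -(add0r (d * Z)) Fq_lin ?Fq0 // (negPf dnz).
have p2 d : d \in @Fqstar F q -> beta (d * Z) = 1%N.
  rewrite inE => /andP [hd dnz].
  by rewrite eb card_Sb ?dZnz // card_T1 dZnFq // part2.
split.
  move=> c; rewrite inE => /andP [hc cnz].
  rewrite eb card_Sb // card_T1 hc part1 //.
  by case: ifP; rewrite ?addn0.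
split.
  split => //.
  apply/card_gt0P; exists Z; rewrite inE Z_neq0 /=.
  have := p2 1; rewrite inE Fq1 oner_eq0 mul1r => /(_ isT) <-.
  by rewrite /beta four1 divr1.
move=> c d; rewrite !inE => /andP [hc cnz] /andP [hd dnz].
have bnz : c + d * Z != 0.
  apply/eqP => e; have := @uniq2 c d 0 0 hc hd Fq0 Fq0; rewrite mul0r addr0 e.
  by case=> // _ d0; move: dnz; rewrite d0 eqxx.
have bnFq : Fq (c + d * Z) = false by rewrite Fq_lin // (negPf dnz).
rewrite eb card_Sb // card_T1 bnFq add0n part3 //.
by have := cardR hc cnz hd dnz; rewrite !inE.
Qed.

End P8.


Unset Implicit Arguments.

Theorem proposition8 (F : finFieldType) (m q : nat) (hm : (0 < m)%N)
  (hq : q = (3 ^ m)%N) (hF : #|F| = (q ^ 2)%N)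
  (alpha Z : F) (halpha : alpha \in @C1 F q)
  (hZq : ~~ @inFq F q Z) (hZ2 : Z ^+ 2 = alpha) :
  let f := fun x : F => x ^+ (q + 2) in
  let beta := fun b : F => betaf f 1 (b / 4%:R) in
  (forall c : F, c \in @Fqstar F q ->
     beta c = (if c ^+ 2 + 1 \in @C1 F q then (q + 2)%N else q))
  /\ ((forall d : F, d \in @Fqstar F q -> beta (d * Z) = 1%N) /\ (0 < nu f 1)%N)
  /\ (forall c d : F, c \in @Fqstar F q -> d \in @Fqstar F q ->
        beta (c + d * Z) \in [:: 0%N; 1%N; 2%N; 5%N]).
Proof. exact: (main_sec hm hq hF halpha hZq hZ2). Qed.
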